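(* Let $\mathbf{L}=(L,\le)$ be a nontrivial finite join-semilattice with greatest element $1$ satisfying property $( * )$, and let $(R,\vee,\circ)$ be a subsemiring of $(\mathrm{JM}_1(\mathbf{L}),\vee,\circ)$ such that (i) $f_{a,b}\in R$ for all $a\in L\setminus\{1\}$ and $b\in L$; (ii) for every $f\in R$ there exist $a\in L\setminus\{1\}$ and $b\in L$ with $f_{a,b}\le f$ (pointwise). Then $(R,\vee,\circ)$ is a finite simple additively idempotent semiring with absorbing greatest element, and it possesses an idempotent irreducible $R$-semimodule satisfying $( * )$. Conversely, every finite simple additively idempotent semiring $(S,+,\cdot)$ with $|S|>2$, with absorbing greatest element, and which possesses an idempotent irreducible $S$-semimodule satisfying $( * )$, is isomorphic to such a semiring $(R,\vee,\circ)$ for some such $\mathbf{L}$.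
   Context: A semiring is a nonempty set with a commutative semigroup operation $+$ and a semigroup operation $\cdot$ satisfying both distributive laws; simple if its only congruences are the identity and the full relation; additively idempotent if $r+r=r$, with order $x\le y:\Leftrightarrow x+y=y$ and (finite case) greatest element the sum of all elements. An element is absorbing if $sr=r=rs$ for all $s$. For a finite join-semilattice $\mathbf{L}$, $\mathrm{JM}_1(\mathbf{L})$ is the set of join-preserving maps $f:L\to L$ with $f(1)=1$, a semiring under pointwise join and composition; $f_{a,b}(x)=b$ if $x\le a$ and $1$ otherwise. An $R$-semimodule is a commutative semigroup $(M,+)$ with an action $R\times M\to M$ such that $r(sx)=(rs)x$, $(r+s)x=rx+sx$, $r(x+y)=rx+ry$; it is idempotent if $x+x=x$. A subsemimodule is a subsemigroup closed under the action; a semimodule congruence is an equivalence compatible with $+$ and the action. $M$ is quasitrivial if $rx=sx$ for all $r,s\in R,x\in M$; id-quasitrivial if $rx=x$ for all $r,x$. $M$ is sub-irreducible if it is not quasitrivial and all its proper subsemimodules are id-quasitrivial; quotient-irreducible if it is not quasitrivial and its only congruences are the identity and $M\times M$; irreducible if both. A finite idempotent commutative semigroup (semilattice) $(M,+)$ with greatest element $\infty_M$ satisfies $( * )$ if there exists $u\in M$ with $\infty_M\ne u+x$ for all $x\in M\setminus\{\infty_M\}$. *)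

(* Defs.v *)
From HB Require Import structures.
From mathcomp Require Import all_boot all_order.
Set Implicit Arguments.
Unset Strict Implicit.
Unset Printing Implicit Defensive.
Import Order.TTheory.
Local Open Scope order_scope.

Section Semiring.
Variables (S : Type) (add mul : S -> S -> S).

Definition is_semiring : Prop :=
  [/\ (forall x y z, add x (add y z) = add (add x y) z),
      (forall x y, add x y = add y x),
      (forall x y z, mul x (mul y z) = mul (mul x y) z),
      (forall x y z, mul x (add y z) = add (mul x y) (mul x z)) &
      (forall x y z, mul (add x y) z = add (mul x z) (mul y z))].

Definition sr_congruence (rel : S -> S -> Prop) : Prop :=
  [/\ (forall x, rel x x), (forall x y, rel x y -> rel y x),
      (forall x y z, rel x y -> rel y z -> rel x z),
      (forall x y x' y', rel x y -> rel x' y' -> rel (add x x') (add y y')) &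
      (forall x y x' y', rel x y -> rel x' y' -> rel (mul x x') (mul y y'))].

Definition sr_simple : Prop :=
  forall rel, sr_congruence rel ->
    (forall x y, rel x y <-> x = y) \/ (forall x y, rel x y).

Definition add_idempotent : Prop := forall r, add r r = r.

(* greatest element w.r.t. x <= y :<-> x + y = y, which is absorbing *)
Definition has_absorbing_greatest : Prop :=
  exists t, (forall x, add x t = t) /\ (forall s, mul s t = t /\ mul t s = t).
End Semiring.

(* [top] is the greatest element of (M,+) w.r.t. x <= y :<-> x + y = y *)
Definition star (M : Type) (addM : M -> M -> M) : Prop :=
  exists top, (forall x, addM x top = top) /\
    exists u, forall x, x <> top -> addM u x <> top.

Section Semimodule.
Variables (S M : Type) (addS mulS : S -> S -> S).
Variables (addM : M -> M -> M) (act : S -> M -> M).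

Definition is_semimodule : Prop :=
  [/\ (forall x y z, addM x (addM y z) = addM (addM x y) z),
      (forall x y, addM x y = addM y x),
      (forall r s x, act r (act s x) = act (mulS r s) x),
      (forall r s x, act (addS r s) x = addM (act r x) (act s x)) &
      (forall r x y, act r (addM x y) = addM (act r x) (act r y))].

Definition sm_idempotent : Prop := forall x, addM x x = x.

Definition quasitrivial : Prop := forall r s x, act r x = act s x.

Definition subsemimodule (N : M -> Prop) : Prop :=
  [/\ exists x, N x,
      (forall x y, N x -> N y -> N (addM x y)) &
      (forall r x, N x -> N (act r x))].

Definition proper_subset (N : M -> Prop) : Prop := exists x, ~ N x.

Definition id_quasitrivial_on (N : M -> Prop) : Prop :=
  forall r x, N x -> act r x = x.

Definition sub_irreducible : Prop :=
  ~ quasitrivial /\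
  forall N, subsemimodule N -> proper_subset N -> id_quasitrivial_on N.

Definition sm_congruence (rel : M -> M -> Prop) : Prop :=
  [/\ (forall x, rel x x), (forall x y, rel x y -> rel y x),
      (forall x y z, rel x y -> rel y z -> rel x z),
      (forall x y x' y', rel x y -> rel x' y' -> rel (addM x x') (addM y y')) &
      (forall r x y, rel x y -> rel (act r x) (act r y))].

Definition quotient_irreducible : Prop :=
  ~ quasitrivial /\
  forall rel, sm_congruence rel ->
    (forall x y, rel x y <-> x = y) \/ (forall x y, rel x y).

Definition irreducible : Prop := sub_irreducible /\ quotient_irreducible.
End Semimodule.

(* S possesses an idempotent irreducible S-semimodule satisfying (star);
   (star) is only defined for finite semilattices, so M is finite. *)
Definition has_idem_irred_star_module (S : Type) (addS mulS : S -> S -> S) : Prop :=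
  exists (M : finType) (addM : M -> M -> M) (act : S -> M -> M),
    [/\ is_semimodule addS mulS addM act, sm_idempotent addM,
        irreducible addM act & star addM].

Section JM.
Context {d : Order.disp_t} {L : finTJoinSemilatticeType d}.

Definition fjoin (f g : {ffun L -> L}) : {ffun L -> L} := [ffun x => f x `|` g x].
Definition fcomp (f g : {ffun L -> L}) : {ffun L -> L} := [ffun x => f (g x)].
Definition fle (f g : {ffun L -> L}) : Prop := forall x, f x <= g x.

Definition in_JM1 (f : {ffun L -> L}) : Prop :=
  (forall x y, f (x `|` y) = f x `|` f y) /\ f \top = \top.

Definition fab (a b : L) : {ffun L -> L} := [ffun x => if x <= a then b else \top].

Definition nontrivial_L : Prop := exists a b : L, a != b.

Definition subsemiring_JM1 (R : {set {ffun L -> L}}) : Prop :=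
  [/\ (forall f, f \in R -> in_JM1 f),
      (exists f, f \in R),
      (forall f g, f \in R -> g \in R -> fjoin f g \in R) &
      (forall f g, f \in R -> g \in R -> fcomp f g \in R)].

(* the semiring (R, \/, o) as a finite type with its operations; under the
   closure hypotheses of subsemiring_JM1, insubd never uses its default *)
Definition Rt (R : {set {ffun L -> L}}) : finType := {f : {ffun L -> L} | f \in R}.
Definition Radd (R : {set {ffun L -> L}}) (x y : Rt R) : Rt R :=
  insubd x (fjoin (val x) (val y)).
Definition Rmul (R : {set {ffun L -> L}}) (x y : Rt R) : Rt R :=
  insubd x (fcomp (val x) (val y)).
End JM.

(* Main.v *)
From HB Require Import structures.
From mathcomp Require Import all_boot all_order.
Require Import Defs.
From Stdlib Require Import Classical.
Import Order.TTheory.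
Local Open Scope order_scope.
Set Implicit Arguments.
Unset Strict Implicit.
Unset Printing Implicit Defensive.

Section Fold.
Variables (T : eqType) (op : T -> T -> T).
Hypotheses (opA : forall x y z, op x (op y z) = op (op x y) z)
           (opC : forall x y, op x y = op y x) (opI : forall x, op x x = x).

Lemma fold_ub (x0 : T) (l : seq T) y : y \in x0 :: l -> op y (foldr op x0 l) = foldr op x0 l.
Proof.
elim: l y => [|z l IH] y /=; first by rewrite inE => /eqP ->.
rewrite !inE => /orP[/eqP->|/orP[/eqP->|H]].
- by rewrite opA (opC x0 z) -opA IH // inE eqxx.
- by rewrite opA opI.
- by rewrite opA (opC y z) -opA IH // inE H orbT.
Qed.

Lemma fold_in (P : T -> Prop) (x0 : T) (l : seq T) :
  P x0 -> (forall x, x \in l -> P x) -> (forall x y, P x -> P y -> P (op x y)) ->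
  P (foldr op x0 l).
Proof.
move=> H0 Hl Hop; elim: l Hl => [|z l IH] Hl //=.
apply: Hop; first by apply: Hl; rewrite inE eqxx.
by apply: IH => x Hx; apply: Hl; rewrite inE Hx orbT.
Qed.
End Fold.

Record SL := MkSL {
  car : finType; sadd : car -> car -> car;
  saddA : associative sadd; saddC : commutative sadd; saddI : idempotent_op sadd;
  stop : car; stopP : forall x, sadd x stop = stop }.

Fact sl_display : Order.disp_t. Proof. exact: Order.Disp tt tt. Qed.

Definition SLT (p : SL) : Type := car p.
HB.instance Definition _ (p : SL) := Finite.copy (SLT p) (car p).

Section SLInst.
Variable p : SL.
Definition sle (x y : SLT p) : bool := sadd x y == y.
Lemma sle_refl : reflexive sle. Proof. by move=> x; rewrite /sle saddI. Qed.
Lemma sle_anti : antisymmetric sle.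
Proof. rewrite /sle => x y /andP[/eqP h1 /eqP h2]. by rewrite -[x]h2 saddC h1. Qed.
Lemma sle_trans : transitive sle.
Proof. rewrite /sle => y x z /eqP h1 /eqP h2; apply/eqP; by rewrite -h2 saddA h1. Qed.
End SLInst.

HB.instance Definition _ (p : SL) := Order.Le_isPOrder.Build sl_display (SLT p) (@sle_refl p) (@sle_anti p) (@sle_trans p).

Lemma sleEjoin (p : SL) (x y : SLT p) : (y <= x) = (sadd x y == x).
Proof. by rewrite saddC. Qed.

HB.instance Definition _ (p : SL) := Order.POrder_Join_isSemilattice.Build sl_display (SLT p) (@saddC p) (@saddA p) (@sleEjoin p).

Lemma slex1 (p : SL) (x : SLT p) : x <= (stop p : SLT p).
Proof. exact/eqP/stopP. Qed.
HB.instance Definition _ (p : SL) := Order.hasTop.Build sl_display (SLT p) (@slex1 p).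

Lemma joinE (p : SL) (x y : SLT p) : x `|` y = sadd x y. Proof. reflexivity. Qed.
Lemma topE (p : SL) : (\top : SLT p) = stop p. Proof. reflexivity. Qed.
Lemma leE (p : SL) (x y : SLT p) : (x <= y) = (sadd x y == y). Proof. reflexivity. Qed.
Section Conv.
Variables (S : finType) (add mul : S -> S -> S).
Variables (M : finType) (addM : M -> M -> M) (act : S -> M -> M).
Hypothesis HS : is_semiring add mul.
Hypothesis Hsimp : sr_simple add mul.
Hypothesis Hidem : add_idempotent add.
Variable t : S.
Hypothesis Ht1 : forall x, add x t = t.
Hypothesis Ht2 : forall s, mul s t = t /\ mul t s = t.
Hypothesis HM : is_semimodule add mul addM act.
Hypothesis HMi : sm_idempotent addM.
Hypothesis Hirr : irreducible addM act.
Variable top : M.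
Hypothesis Htop : forall x, addM x top = top.
Variable u : M.
Hypothesis Hu : forall x, x <> top -> addM u x <> top.
Hypothesis Hcard : (1 < #|S|)%N.

Let addA : forall x y z, add x (add y z) = add (add x y) z. Proof. by case: HS. Qed.
Let addC : forall x y, add x y = add y x. Proof. by case: HS. Qed.
Let mulA : forall x y z, mul x (mul y z) = mul (mul x y) z. Proof. by case: HS. Qed.
Let maddA : forall x y z, addM x (addM y z) = addM (addM x y) z. Proof. by case: HM. Qed.
Let maddC : forall x y, addM x y = addM y x. Proof. by case: HM. Qed.
Let actM : forall r s x, act r (act s x) = act (mul r s) x. Proof. by case: HM. Qed.
Let actD : forall r s x, act (add r s) x = addM (act r x) (act s x). Proof. by case: HM. Qed.
Let actMD : forall r x y, act r (addM x y) = addM (act r x) (act r y). Proof. by case: HM. Qed.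

Definition mle (x y : M) := addM x y = y.

Lemma mle_refl x : mle x x. Proof. exact: HMi. Qed.
Lemma mle_trans x y z : mle x y -> mle y z -> mle x z.
Proof. rewrite /mle => h1 h2; by rewrite -h2 maddA h1. Qed.
Lemma mle_anti x y : mle x y -> mle y x -> x = y.
Proof. rewrite /mle => h1 h2; by rewrite -h1 maddC h2. Qed.
Lemma mle_top x : mle x top. Proof. exact: Htop. Qed.
Lemma top_le x : mle top x -> x = top.
Proof. move=> h; apply: mle_anti => //; exact: mle_top. Qed.
Lemma mle_joinl x y : mle x (addM x y). Proof. by rewrite /mle maddA HMi. Qed.
Lemma mle_joinr x y : mle y (addM x y). Proof. by rewrite maddC; exact: mle_joinl. Qed.
Lemma mle_join x y z : mle x z -> mle y z -> mle (addM x y) z.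
Proof. rewrite /mle => h1 h2; by rewrite -maddA h2 h1. Qed.
Lemma mle_joinE x y z : mle (addM x y) z -> mle x z /\ mle y z.
Proof. move=> h; split; apply: mle_trans h; [exact: mle_joinl | exact: mle_joinr]. Qed.
Lemma act_mono s x y : mle x y -> mle (act s x) (act s y).
Proof. rewrite /mle => h; by rewrite -actMD h. Qed.

Lemma mdistr a b c : addM (addM a b) c = addM (addM a c) (addM b c).
Proof.
by rewrite -(maddA a c (addM b c)) (maddA c b c) (maddC c b) -(maddA b c c) HMi maddA.
Qed.

Lemma nqt : ~ quasitrivial act. Proof. by case: Hirr => [[]]. Qed.
Lemma Hsub : forall N, subsemimodule addM act N -> proper_subset N -> id_quasitrivial_on act N.
Proof. by case: Hirr => [[]]. Qed.
Lemma Hquo : forall rel, sm_congruence addM act rel ->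
    (forall x y, rel x y <-> x = y) \/ (forall x y, rel x y).
Proof. by case: Hirr => _ []. Qed.

Lemma t_const x y : act t x = act t y.
Proof.
have C : sm_congruence addM act (fun x y => act t x = act t y).
  split.
  - by [].
  - by move=> ? ? ->.
  - by move=> ? ? ? -> ->.
  - by move=> ? ? ? ? h1 h2; rewrite !actMD h1 h2.
  - by move=> r ? ? h; rewrite !actM (proj2 (Ht2 r)) h.
case: (Hquo C) => [Hid|]; last by apply.
exfalso; apply: nqt => r s z.
have E : forall r z, act r z = z.
  by move=> r' z'; apply/Hid; rewrite actM (proj2 (Ht2 r')).
by rewrite !E.
Qed.

Lemma t_top x : act t x = top.
Proof.
pose c := act t top.
have Hc : forall r, act r c = c by move=> r; rewrite /c actM (proj1 (Ht2 r)).
have C : sm_congruence addM act (fun x y => addM x c = addM y c).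
  split.
  - by [].
  - by move=> ? ? ->.
  - by move=> ? ? ? -> ->.
  - move=> x1 y1 x2 y2 h1 h2.
    by rewrite mdistr h1 h2 -mdistr.
  - by move=> r x1 y1 h; rewrite -(Hc r) -!actMD h.
case: (Hquo C) => [Hid|Hfull].
  exfalso; apply: nqt => r s z.
  have E : forall z, addM z c = z by move=> z'; apply/Hid; rewrite -maddA HMi.
  have F : forall r, act r z = c.
    by move=> r'; rewrite -(E (act r' z)) /c (t_const top z) -actD Ht1.
  by rewrite !F.
have : addM c c = addM top c := Hfull c top.
rewrite HMi maddC Htop => hc; rewrite (t_const x top); exact: hc.
Qed.

Lemma act_top s : act s top = top.
Proof. by rewrite -(t_top top) actM (proj1 (Ht2 s)). Qed.

Lemma exists_nontop : exists x1, x1 <> top.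
Proof.
apply: NNPP => H; apply: nqt => r s x.
have E : forall y, y = top by move=> y; apply: NNPP => h; apply: H; exists y.
by rewrite (E (act r x)) (E (act s x)).
Qed.

Lemma u_nontop : u <> top.
Proof.
case: exists_nontop => x1 h1 hu; apply: (Hu h1); by rewrite hu maddC Htop.
Qed.

Lemma Z_step x : x <> top -> exists s, act s x <> top.
Proof.
move=> hx; apply: NNPP => H.
have Z : forall s, act s x = top by move=> s; apply: NNPP => h; apply: H; exists s.
pose N := fun y => forall s, act s y = top.
have SN : subsemimodule addM act N.
  split; first by exists top => s; exact: act_top.
  - by move=> a b ha hb s; rewrite actMD ha hb HMi.
  - by move=> r a ha s; rewrite actM ha.
case: (classic (proper_subset N)) => [P|P].
  by apply: hx; rewrite -(Hsub SN P t Z) t_top.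
apply: nqt => r s y.
have : N y by apply: NNPP => h; apply: P; exists y.
by move=> Ny; rewrite !Ny.
Qed.

Lemma trans_act x b : x <> top -> exists s, act s x = b.
Proof.
move=> hx; pose N := fun y => exists s, act s x = y.
have SN : subsemimodule addM act N.
  split; first by exists (act t x), t.
  - by move=> a c [s1 <-] [s2 <-]; exists (add s1 s2); rewrite actD.
  - by move=> r a [s1 <-]; exists (mul r s1); rewrite actM.
case: (classic (proper_subset N)) => [P|P].
  case: (Z_step hx) => s hs; exfalso; apply: hs.
  by rewrite -(Hsub SN P t (ex_intro _ s erefl)) t_top.
by apply: NNPP => h; apply: P; exists b.
Qed.

Lemma mle_joinP a b c : mle (addM a b) c <-> mle a c /\ mle b c.
Proof. split; [exact: mle_joinE | by case; exact: mle_join]. Qed.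

Lemma separation c x y : c <> top ->
  (forall s, mle (act s x) c <-> mle (act s y) c) -> x = y.
Proof.
move=> hc; pose rel x y := forall s, mle (act s x) c <-> mle (act s y) c.
have C : sm_congruence addM act rel.
  split.
  - by move=> ? ?.
  - by move=> ? ? h s; split => /h.
  - by move=> ? ? ? h1 h2 s; split => [/h1/h2|/h2/h1].
  - move=> x1 y1 x2 y2 h1 h2 s; rewrite !actMD !mle_joinP.
    by split => -[/h1 ? /h2 ?].
  - by move=> r ? ? h s; rewrite !actM; exact: h.
case: (Hquo C) => [Hid|Hfull]; first by move/Hid.
case: exists_nontop => x1 h1; case: (trans_act c h1) => s hs.
have := (proj1 (Hfull x1 top s)); rewrite hs act_top => /(_ (mle_refl c)).
by move/top_le/hc.
Qed.

Lemma faithful r s : (forall x, act r x = act s x) -> r = s.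
Proof.
pose rel r s := forall x, act r x = act s x.
have C : sr_congruence add mul rel.
  split.
  - by move=> ? ?.
  - by move=> ? ? h x.
  - by move=> ? ? ? h1 h2 x; rewrite h1 h2.
  - by move=> ? ? ? ? h1 h2 x; rewrite !actD h1 h2.
  - by move=> ? ? ? ? h1 h2 x; rewrite -!actM h2 h1.
case: (Hsimp C) => [Hid|Hfull]; first by move/Hid.
by exfalso; apply: nqt => r' s' x; apply: Hfull.
Qed.

Lemma bigG a c : a <> top -> c <> top ->
  exists G, forall x, mle (act G x) c <-> mle x a.
Proof.
move=> ha hc; case: (trans_act c ha) => q0 hq0.
pose l := [seq q <- enum S | addM (act q a) c == c].
pose G := foldr add q0 l.
have HG : mle (act G a) c.
  apply: (fold_in (P := fun q => mle (act q a) c)).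
  - by rewrite hq0; exact: mle_refl.
  - by move=> x; rewrite mem_filter => /andP[/eqP].
  - by move=> x y hx hy; rewrite actD; exact: mle_join.
have Hub : forall q y, mle (act q a) c -> mle (act q y) (act G y).
  move=> q y hq.
  have -> : G = add q G.
    apply/esym/(fold_ub addA addC Hidem).
    by rewrite !inE mem_filter mem_enum andbT; apply/orP; right; apply/eqP.
  by rewrite actD; exact: mle_joinl.
exists G => x; split => h; last first.
  by apply: mle_trans HG; exact: act_mono.
suff E : a = addM a x by rewrite /mle maddC -E.
apply: (separation hc) => s; split => hs; last first.
  by apply: mle_trans hs; apply: act_mono; exact: mle_joinl.
rewrite actMD; apply: mle_join => //.
by apply: mle_trans h; exact: Hub.
Qed.

Lemma maxV (V : {set M}) x0 : x0 \in V ->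
  (forall x y, x \in V -> y \in V -> addM x y \in V) ->
  exists a, a \in V /\ forall x, x \in V -> mle x a.
Proof.
move=> h0 hcl; exists (foldr addM x0 (enum V)); split.
  apply: (fold_in (P := fun x => x \in V)) => // x; by rewrite mem_enum.
move=> x hx; apply: (fold_ub maddA maddC HMi).
by rewrite inE mem_enum hx orbT.
Qed.

Lemma minV : exists r0 a0, a0 <> top /\ forall x, act r0 x <> top <-> mle x a0.
Proof.
pose V r := [set x | act r x != top].
pose P := fun n => [exists r : S, (0 < #|V r|)%N && (#|V r| == n)].
have exP : exists n, P n.
  case: exists_nontop => x1 h1; case: (trans_act u h1) => q hq.
  exists #|V q|; apply/existsP; exists q; rewrite eqxx andbT card_gt0.
  apply/set0Pn; exists x1; rewrite inE hq; apply/eqP; exact: u_nontop.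
case: (ex_minnP exP) => m /existsP[r /andP[hpos /eqP hm]] hmin.
have key : forall q x, x \in V (mul q r) -> V (mul q r) = V r.
  move=> q x hx; apply/eqP; rewrite eqEcard; apply/andP; split.
    apply/subsetP => y; rewrite !inE; apply: contra => /eqP hy.
    by rewrite -actM hy act_top.
  rewrite hm; apply: hmin; apply/existsP; exists (mul q r).
  rewrite eqxx andbT card_gt0; apply/set0Pn; by exists x.
have hcl : forall x y, x \in V r -> y \in V r -> addM x y \in V r.
  move=> x y; rewrite !inE => /eqP hx /eqP hy.
  case: (trans_act u hx) => q hq.
  have hxq : x \in V (mul q r) by rewrite inE -actM hq; apply/eqP; exact: u_nontop.
  have : y \in V (mul q r) by rewrite (key _ _ hxq) inE; exact/eqP.
  rewrite !inE -!actM => /eqP hy'.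
  apply/eqP => h; apply: (Hu hy'); by rewrite -hq -!actMD h act_top.
have /set0Pn[x0 hx0] : V r != set0 by rewrite -card_gt0.
case: (maxV hx0 hcl) => a0 [ha0 hmax].
exists r, a0; split.
  by move=> e; move: ha0; rewrite inE e act_top eqxx.
move=> x; split.
  by move=> h; apply: hmax; rewrite inE; exact/eqP.
move=> hx e; move: ha0; rewrite inE => /eqP; apply.
apply: top_le; rewrite -e; exact: act_mono.
Qed.

Lemma s_c c : c <> top -> exists p, forall x, act p x <> top <-> mle x c.
Proof.
move=> hc; case: minV => r0 [a0 [ha0 H0]].
case: (bigG hc ha0) => G HG.
exists (mul r0 G) => x; rewrite -actM; split => h.
  by apply/HG/H0.
by apply/H0/HG.
Qed.

Lemma tsep x0 y0 : (forall q, act q x0 = top <-> act q y0 = top) -> x0 = y0.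
Proof.
pose rel x y := forall q, act q x = top <-> act q y = top.
have H1 : forall a a' b b', rel a a' -> rel b b' ->
    forall q, act q (addM a' b') = top -> act q (addM a b) = top.
  move=> x x' y y' hx hy q hq; apply: NNPP => hc.
  case: (s_c hc) => p Hp.
  have lx : mle (act q x') (act q (addM x y)).
    apply: (proj1 (Hp _)); rewrite actM => e.
    have /(proj2 (Hp _)) : mle (act q x) (act q (addM x y)).
      by rewrite actMD; exact: mle_joinl.
    by rewrite actM; apply; exact: (proj2 (hx _) e).
  have ly : mle (act q y') (act q (addM x y)).
    apply: (proj1 (Hp _)); rewrite actM => e.
    have /(proj2 (Hp _)) : mle (act q y) (act q (addM x y)).
      by rewrite actMD; exact: mle_joinr.
    by rewrite actM; apply; exact: (proj2 (hy _) e).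
  apply/hc/top_le; rewrite -hq actMD; exact: mle_join.
have C : sm_congruence addM act rel.
  split.
  - by move=> ? ?.
  - by move=> ? ? h q; split => /h.
  - by move=> ? ? ? h1 h2 q; split => [/h1/h2|/h2/h1].
  - have Hs : forall a b, rel a b -> rel b a by move=> a b h q; split => e; [exact: (proj2 (h q) e)|exact: (proj1 (h q) e)].
    move=> x1 y1 x2 y2 h1 h2 q; split; [apply: H1; exact: Hs | exact: H1].
  - by move=> r ? ? h q; rewrite !actM; exact: h.
case: (Hquo C) => [Hid|Hfull]; first by move/Hid.
case: exists_nontop => x1 h1; case: (trans_act u h1) => q hq.
by exfalso; apply: u_nontop; rewrite -hq; apply/(Hfull x1 top q); exact: act_top.
Qed.

Lemma twoimg : exists s0 a0 b0, a0 <> top /\ b0 <> top /\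
  forall x, act s0 x = if addM x a0 == a0 then b0 else top.
Proof.
pose Y s := [set act s x | x in M].
have topY : forall s, top \in Y s by move=> s; rewrite -(act_top s); exact: imset_f.
pose P := fun n => [exists s : S, (1 < #|Y s|)%N && (#|Y s| == n)].
have exP : exists n, P n.
  case: exists_nontop => x1 h1; case: (trans_act u h1) => q hq.
  exists #|Y q|; apply/existsP; exists q; rewrite eqxx andbT.
  apply/card_gt1P; exists u, top; split => //; last by apply/eqP; exact: u_nontop.
  by rewrite -hq; exact: imset_f.
case: (ex_minnP exP) => m /existsP[s /andP[hpos /eqP hm]] hmin.
have key : forall q y y', y \in Y s -> y' \in Y s -> y <> top ->
    act q y = top -> act q y' = top.
  move=> q y y' hy hy' hyt hq; apply: NNPP => hq'.
  have hY : Y (mul q s) = [set act q z | z in Y s].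
    by rewrite -imset_comp; apply: eq_imset => z; rewrite /= actM.
  have h1 : (1 < #|Y (mul q s)|)%N.
    rewrite hY; apply/card_gt1P; exists (act q y'), top; split.
    - exact: imset_f.
    - by rewrite -(act_top q); apply: imset_f.
    - exact/eqP.
  have h2 : (m <= #|Y (mul q s)|)%N.
    by apply: hmin; apply/existsP; exists (mul q s); rewrite h1 eqxx.
  have /imset_injP inj : #|[set act q z | z in Y s]| == #|Y s|.
    rewrite eqn_leq leq_imset_card /= -hY hm //.
  apply: hyt; apply: inj => //; by rewrite hq act_top.
have Yuniq : forall y y', y \in Y s -> y' \in Y s -> y <> top -> y' <> top -> y = y'.
  move=> y y' hy hy' ht ht'; apply: tsep => q; split; [exact: key | exact: key].
have [b0 [hb0 hb0t]] : exists b0, b0 \in Y s /\ b0 <> top.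
  case/card_gt1P: hpos => y1 [y2 [hy1 hy2 hne]].
  case: (eqVneq y1 top) => e; last by exists y1; split => //; exact/eqP.
  by exists y2; split => //; move=> e2; move: hne; rewrite e e2 eqxx.
have two : forall x, act s x <> top -> act s x = b0.
  move=> x hx; apply: Yuniq => //; exact: imset_f.
case/imsetP: hb0 => x0 _ hx0.
pose V := [set x | act s x != top].
have hV0 : x0 \in V by rewrite inE -hx0; exact/eqP.
have hcl : forall x y, x \in V -> y \in V -> addM x y \in V.
  move=> x y; rewrite !inE => /eqP hx /eqP hy.
  by rewrite actMD (two _ hx) (two _ hy) HMi; exact/eqP.
case: (maxV hV0 hcl) => a0 [ha0 hmax].
have ea0 : act s a0 = b0 by apply: two; move: ha0; rewrite inE => /eqP.
exists s, a0, b0; split; last split => //.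
  by move=> e; move: ha0; rewrite inE e act_top eqxx.
move=> x; case: eqP => hx.
  apply: two => e; apply: hb0t; apply: top_le; rewrite -e -ea0; exact: act_mono.
apply: NNPP => e; apply: hx; apply: hmax; rewrite inE; apply/eqP => e'; apply: e; by rewrite e'.
Qed.

Definition fabM (a b x : M) := if addM x a == a then b else top.

Lemma fab_ex a b : a <> top -> exists s, forall x, act s x = fabM a b x.
Proof.
move=> ha; case: twoimg => s0 [a0 [b0 [ha0 [hb0 H0]]]].
case: (bigG ha ha0) => G HG; case: (trans_act b hb0) => q hq.
exists (mul q (mul s0 G)) => x; rewrite -!actM H0 /fabM.
have -> : (addM (act G x) a0 == a0) = (addM x a == a).
  by apply/eqP/eqP => h; apply/HG.
by case: ifP => _; rewrite ?hq ?act_top.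
Qed.

Definition DomF s := exists a b, a <> top /\ forall x, mle (fabM a b x) (act s x).

Lemma dom_ex s : DomF s.
Proof.
have Dadd : forall p q, DomF q -> DomF (add p q).
  move=> p q [a [b [ha hq]]]; exists a, b; split => // x.
  rewrite actD; apply: mle_trans (hq x) _; exact: mle_joinr.
have Dmull : forall p q, DomF q -> DomF (mul p q).
  move=> p q [a [b [ha hq]]]; exists a, (act p b); split => // x.
  rewrite -actM; apply: mle_trans (act_mono p (hq x)).
  rewrite /fabM; case: ifP => _; [exact: mle_refl | rewrite act_top; exact: mle_refl].
have Dmulr : forall p q, DomF q -> DomF (mul q p).
  move=> p q [a [b [ha hq]]].
  case: (classic (exists x, mle (act p x) a)) => [[x0 hx0]|hno]; last first.
    exists a, b; split => // x; rewrite -actM.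
    have : mle (fabM a b (act p x)) (act q (act p x)) := hq _.
    rewrite /fabM; case: eqP => [e|_ /top_le ->]; last exact: mle_top.
    by exfalso; apply: hno; exists x.
  pose V := [set x | addM (act p x) a == a].
  have hV0 : x0 \in V by rewrite inE; exact/eqP.
  have hcl : forall x y, x \in V -> y \in V -> addM x y \in V.
    move=> x y; rewrite !inE => /eqP hx /eqP hy; apply/eqP.
    by rewrite actMD; apply: mle_join.
  case: (maxV hV0 hcl) => a' [ha' hmax].
  have la' : mle (act p a') a by move: ha'; rewrite inE => /eqP.
  exists a'; exists b; split.
    by move=> e; apply: ha; apply: top_le; rewrite -(act_top p) -e.
  move=> x; rewrite -actM; have := hq (act p x); rewrite /fabM.
  case: (eqVneq (addM x a') a') => hx.
    have e : addM (act p x) a = a := mle_trans (act_mono p hx) la'.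
    by rewrite e eqxx.
  case: eqP => hpx //.
  by move/eqP: hx; case; apply: hmax; rewrite inE; exact/eqP.
pose rel r r' := r = r' \/ (DomF r /\ DomF r').
have C : sr_congruence add mul rel.
  split.
  - by move=> ?; left.
  - move=> x y [e|[h1 h2]]; [by left; rewrite e | by right].
  - move=> x y z [e1|[h1 h2]] [e2|[h3 h4]].
    + by left; rewrite e1 e2.
    + by right; rewrite e1.
    + by right; rewrite -e2.
    + by right.
  - move=> x y x' y' [e1|[h1 h2]] [e2|[h3 h4]].
    + by left; rewrite e1 e2.
    + by right; split; apply: Dadd.
    + by right; split; rewrite addC; apply: Dadd.
    + by right; split; apply: Dadd.
  - move=> x y x' y' [e1|[h1 h2]] [e2|[h3 h4]].
    + by left; rewrite e1 e2.
    + by right; split; apply: Dmull.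
    + by right; split; apply: Dmulr.
    + by right; split; apply: Dmull.
case: exists_nontop => x1 h1.
case: (fab_ex x1 h1) => s1 hs1.
have D1 : DomF s1.
  by exists x1, x1; split => // x; rewrite hs1; exact: mle_refl.
have Dt : DomF t.
  by exists x1, top; split => // x; rewrite t_top; exact: mle_top.
case: (Hsimp C) => [Hid|Hfull].
  have : s1 = t by apply/Hid; right.
  move=> e; exfalso; apply: h1.
  by rewrite -(t_top x1) -e hs1 /fabM HMi eqxx.
case/card_gt1P: Hcard => y1 [y2 [_ _ hne]].
have [r' hr'] : exists r', r' <> s.
  case: (eqVneq y1 s) => e; last by exists y1; exact/eqP.
  by exists y2 => e2; move: hne; rewrite e e2 eqxx.
case: (Hfull s r') => [e|[]] //.
by exfalso; apply: hr'; rewrite e.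
Qed.
End Conv.

Lemma dir2 (S : finType) (add mul : S -> S -> S) :
     is_semiring add mul -> (2 < #|S|)%N ->
     sr_simple add mul -> add_idempotent add ->
     has_absorbing_greatest add mul ->
     has_idem_irred_star_module add mul ->
     exists (d : Order.disp_t) (L : finTJoinSemilatticeType d)
            (R : {set {ffun L -> L}}),
       [/\ @nontrivial_L d L /\ star (@Order.join d L),
           subsemiring_JM1 R,
           (forall a b : L, a != \top -> fab a b \in R),
           (forall f, f \in R -> exists a b : L, a != \top /\ fle (fab a b) f) &
           exists phi : S -> Rt R,
             [/\ bijective phi,
                 (forall x y, phi (add x y) = Radd (phi x) (phi y)) &
                 (forall x y, phi (mul x y) = Rmul (phi x) (phi y))]].
Proof.
move=> HS Hc2 Hsimp Hidem [t [Ht1 Ht2]] [M [addM [act [HM HMi Hirr Hstar]]]].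
have Hcard : (1 < #|S|)%N by apply: ltnW.
case: Hstar => top [Htop [u Hu]].
have maddA : forall x y z, addM x (addM y z) = addM (addM x y) z by case: HM.
have maddC : forall x y, addM x y = addM y x by case: HM.
have actM : forall r s x, act r (act s x) = act (mul r s) x by case: HM.
have actD : forall r s x, act (add r s) x = addM (act r x) (act s x) by case: HM.
have actMD : forall r x y, act r (addM x y) = addM (act r x) (act r y) by case: HM.
pose p := MkSL maddA maddC HMi Htop.
pose L := SLT p.
pose phi := fun s : S => [ffun x : L => (act s x : L)].
pose R := [set phi s | s : S].
have memR : forall s, phi s \in R by move=> s; exact: imset_f.
have Rphi : forall f, f \in R -> exists s, f = phi s by move=> f /imsetP[s _ ->]; exists s.
have acttop := act_top Ht1 Ht2 HM HMi Hirr Htop.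
case: (exists_nontop Hirr top) => x1 hx1.
exists sl_display, L, R; split.
- split; first by exists x1, top; apply/eqP.
  by exists top; split => //; exists u.
- split.
  + move=> f /Rphi[s ->]; split; last by rewrite ffunE; exact: acttop.
    by move=> x y; rewrite !ffunE; exact: actMD.
  + by exists (phi t).
  + move=> f g /Rphi[r ->] /Rphi[s ->].
    suff -> : fjoin (phi r) (phi s) = phi (add r s) by [].
    by apply/ffunP => x; rewrite !ffunE actD.
  + move=> f g /Rphi[r ->] /Rphi[s ->].
    suff -> : fcomp (phi r) (phi s) = phi (mul r s) by [].
    by apply/ffunP => x; rewrite !ffunE actM.
- move=> a b ha.
  have ha' : a <> top by move=> e; move: ha; rewrite e eqxx.
  case: (fab_ex HS Hidem Ht1 Ht2 HM HMi Hirr Htop Hu b ha') => s hs.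
  suff -> : fab a b = phi s by [].
  apply/ffunP => x; rewrite !ffunE hs /fabM; reflexivity.
- move=> f /Rphi[s ->].
  case: (dom_ex HS Hsimp Hidem Ht1 Ht2 HM HMi Hirr Htop Hu Hcard s) => a [b [ha hab]].
  exists a, b; split; first by apply/eqP.
  move=> x; rewrite !ffunE; apply/eqP; exact: (hab x).
pose phiR := fun s : S => (exist _ (phi s) (memR s) : Rt R).
have phi_inj : forall r s, phi r = phi s -> r = s.
  move=> r s e; apply: (faithful Hsimp HM Hirr) => x.
  by have := congr1 (fun f : {ffun L -> L} => f (x : L)) e; rewrite !ffunE.
exists phiR; split.
- pose g := fun y : Rt R => odflt t [pick s | phi s == val y].
  exists g.
  + move=> s; rewrite /g; case: pickP => [s' /eqP e|h] /=; first exact: phi_inj.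
    by move: (h s); rewrite eqxx.
  + move=> y; rewrite /g; case: pickP => [s' /eqP e|h] /=.
      by apply: val_inj.
    case: y h => f hf /= h; case/Rphi: (hf) => s e.
    by move: (h s); rewrite /= -e eqxx.
- move=> x y; apply: val_inj; rewrite /Radd /= insubdK /=.
    by apply/ffunP => z; rewrite !ffunE actD.
  have -> : fjoin (phi x) (phi y) = phi (add x y) by apply/ffunP => z; rewrite !ffunE actD.
  exact: memR.
- move=> x y; apply: val_inj; rewrite /Rmul /= insubdK /=.
    by apply/ffunP => z; rewrite !ffunE actM.
  have -> : fcomp (phi x) (phi y) = phi (mul x y) by apply/ffunP => z; rewrite !ffunE actM.
  exact: memR.
Qed.

Lemma dir1 (d : Order.disp_t) (L : finTJoinSemilatticeType d)
          (R : {set {ffun L -> L}}) :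
     @nontrivial_L d L ->
     star (@Order.join d L) ->
     subsemiring_JM1 R ->
     (forall a b : L, a != \top -> fab a b \in R) ->
     (forall f, f \in R -> exists a b : L, a != \top /\ fle (fab a b) f) ->
     [/\ is_semiring (@Radd d L R) (@Rmul d L R),
         sr_simple (@Radd d L R) (@Rmul d L R),
         add_idempotent (@Radd d L R),
         has_absorbing_greatest (@Radd d L R) (@Rmul d L R) &
         has_idem_irred_star_module (@Radd d L R) (@Rmul d L R)].
Proof.
move=> [a1 [b1 hab]] Hstar [HJM _ Hjoin Hcomp] Hfab Hdom.
have valAdd : forall x y : Rt R, val (Radd x y) = fjoin (val x) (val y).
  by move=> x y; rewrite /Radd insubdK //; apply: Hjoin; exact: valP.
have valMul : forall x y : Rt R, val (Rmul x y) = fcomp (val x) (val y).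
  by move=> x y; rewrite /Rmul insubdK //; apply: Hcomp; exact: valP.
have JMj : forall (f : Rt R) x y, val f (x `|` y) = val f x `|` val f y.
  by move=> f; case: (HJM _ (valP f)).
have JMt : forall (f : Rt R), val f \top = \top.
  by move=> f; case: (HJM _ (valP f)).
have [a0 ha0] : exists a0 : L, a0 != \top.
  case: (eqVneq a1 \top) => e; last by exists a1.
  by exists b1; move: hab; rewrite e eq_sym.
pose fabR := fun a c (h : a != \top) => (exist _ (fab a c) (Hfab a c h) : Rt R).
pose T := fabR a0 \top ha0.
have valT : forall x, val T x = \top by move=> x; rewrite /= ffunE; case: ifP.
have ext : forall x y : Rt R, (forall z, val x z = val y z) -> x = y.
  by move=> x y h; apply: val_inj; apply/ffunP.
have addI : add_idempotent (@Radd d L R).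
  by move=> r; apply: ext => z; rewrite valAdd ffunE joinxx.
have addT : forall x, Radd x T = T.
  by move=> x; apply: ext => z; rewrite valAdd ffunE valT joinx1.
have HSR : is_semiring (@Radd d L R) (@Rmul d L R).
  split.
  - by move=> x y z; apply: ext => w; rewrite !valAdd !ffunE ?valAdd ?ffunE joinA.
  - by move=> x y; apply: ext => w; rewrite !valAdd !ffunE joinC.
  - by move=> x y z; apply: ext => w; rewrite !valMul !ffunE ?valMul ?ffunE.
  - by move=> x y z; apply: ext => w; rewrite !valMul !valAdd !ffunE ?valMul ?valAdd ?ffunE JMj.
  - by move=> x y z; apply: ext => w; rewrite !valMul !valAdd !ffunE !valMul !ffunE.
split => //.
-
  move=> rel [Hr Hs Ht Hadd Hmul].
  case: (classic (forall x y, rel x y <-> x = y)) => [hh|hh]; [by left | right].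
  have [x [y [hr hne]]] : exists x y, rel x y /\ x <> y.
    apply: NNPP => hn; apply: hh => x y; split => [hr|->]; last exact: Hr.
    by apply: NNPP => hne; apply: hn; exists x, y.
  have key : forall h k p, rel h k -> val h p <= val k p -> val h p != val k p ->
      forall a c (ha : a != \top), rel (fabR a c ha) T.
    move=> h k p hhk hle hne' a c ha.
    have hp : val h p != \top.
      apply: contra hne' => /eqP e; move: hle; rewrite e le1x.
      by rewrite eq_sym.
    have := Hmul _ _ _ _ (Hmul _ _ _ _ (Hr (fabR _ c hp)) hhk) (Hr (fabR a p ha)).
    have -> : Rmul (Rmul (fabR _ c hp) h) (fabR a p ha) = fabR a c ha.
      apply: ext => z; rewrite !valMul !ffunE /=.
      case: (z <= a); first by rewrite lexx.
      by rewrite JMt le1x (negbTE hp).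
    have -> : Rmul (Rmul (fabR _ c hp) k) (fabR a p ha) = T.
      apply: ext => z; rewrite valT !valMul !ffunE /=.
      case: (z <= a); last by rewrite JMt le1x (negbTE hp).
      case: ifP => // hkh; exfalso; move/negP: hne'; apply.
      by rewrite eq_le hle hkh.
    done.
  have Hall : forall a c (ha : a != \top), rel (fabR a c ha) T.
    have hrx : rel x (Radd x y) by rewrite -{1}(addI x); apply: Hadd.
    have hry : rel y (Radd x y) by rewrite -{1}(addI y); apply: Hadd => //; exact: Hs.
    have [p hp] : exists p, val x p != val y p.
      apply: NNPP => hn; apply: hne; apply: ext => z.
      by apply/eqP; apply: NNPP => hz; apply: hn; exists z; exact/negP.
    case: (eqVneq (val x p) (val (Radd x y) p)) => ex.
      apply: (key y (Radd x y) p hry); rewrite valAdd ffunE; first exact: leUr.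
      apply: contra hp => /eqP e; apply/eqP; by rewrite ex valAdd ffunE.
    by apply: (key x (Radd x y) p hrx) => //; rewrite valAdd ffunE; exact: leUl.
  have relT : forall f, rel f T.
    move=> f; case: (Hdom _ (valP f)) => a [b [ha hle]].
    have := Hadd _ _ _ _ (Hr f) (Hall a b ha).
    have -> : Radd f (fabR a b ha) = f.
      by apply: ext => z; rewrite valAdd ffunE join_l //; exact: hle.
    by rewrite addT.
  by move=> f g; apply: Ht (relT f) _; apply: Hs; exact: relT.
-
  exists T; split => // s; split; apply: ext => z; rewrite valMul ffunE.
  + by rewrite !valT JMt.
  + by rewrite !valT.
-
  exists L, (@Order.join d L), (fun (r : Rt R) (x : L) => val r x); split => //.
  + split.
    * by move=> x y z; rewrite joinA.
    * by move=> x y; rewrite joinC.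
    * by move=> r s x; rewrite valMul ffunE.
    * by move=> r s x; rewrite valAdd ffunE.
    * by move=> r x y; rewrite JMj.
  + by move=> x; rewrite joinxx.
  + have nqt : ~ quasitrivial (fun (r : Rt R) (x : L) => val r x).
      move=> hq; have := hq (fabR a0 a0 ha0) T a0; rewrite valT /= ffunE lexx => e.
      by move: (ha0); rewrite e eqxx.
    split; split => //.
    * move=> N [_ _ HNact] [z hz] r x hx.
      case: (eqVneq x \top) => [->|hxt]; first exact: JMt.
      exfalso; apply: hz; have := HNact (fabR x z hxt) x hx; by rewrite /= ffunE lexx.
    * move=> rel [Hr Hs Ht _ Hact].
      case: (classic (forall x y, rel x y <-> x = y)) => [hh|hh]; [by left | right].
      have [x [y [hr hne]]] : exists x y, rel x y /\ x <> y.
        apply: NNPP => hn; apply: hh => x y; split => [hr|->]; last exact: Hr.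
        by apply: NNPP => hne; apply: hn; exists x, y.
      have key : forall x y, rel x y -> ~~ (x <= y) -> forall b, rel \top b.
        move=> x' y' hr' hxy b.
        have hyt : y' != \top by apply: contra hxy => /eqP ->; exact: lex1.
        have := Hact (fabR y' b hyt) _ _ hr'; rewrite /= !ffunE lexx (negbTE hxy).
        done.
      have Htop : forall b, rel \top b.
        case: (boolP (x <= y)) => hxy; last exact: key hr hxy.
        apply: (key y x (Hs _ _ hr)); apply/negP => hyx; apply: hne.
        by apply/le_anti; rewrite hxy hyx.
      by move=> a b; apply: Ht (Hs _ _ (Htop a)) (Htop b).
Qed.

Theorem theorem5p4 :
  (forall (d : Order.disp_t) (L : finTJoinSemilatticeType d)
          (R : {set {ffun L -> L}}),
     @nontrivial_L d L ->
     star (@Order.join d L) ->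
     subsemiring_JM1 R ->
     (forall a b : L, a != \top -> fab a b \in R) ->
     (forall f, f \in R -> exists a b : L, a != \top /\ fle (fab a b) f) ->
     [/\ is_semiring (@Radd d L R) (@Rmul d L R),
         sr_simple (@Radd d L R) (@Rmul d L R),
         add_idempotent (@Radd d L R),
         has_absorbing_greatest (@Radd d L R) (@Rmul d L R) &
         has_idem_irred_star_module (@Radd d L R) (@Rmul d L R)])
  /\
  (forall (S : finType) (add mul : S -> S -> S),
     is_semiring add mul -> (2 < #|S|)%N ->
     sr_simple add mul -> add_idempotent add ->
     has_absorbing_greatest add mul ->
     has_idem_irred_star_module add mul ->
     exists (d : Order.disp_t) (L : finTJoinSemilatticeType d)
            (R : {set {ffun L -> L}}),
       [/\ @nontrivial_L d L /\ star (@Order.join d L),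
           subsemiring_JM1 R,
           (forall a b : L, a != \top -> fab a b \in R),
           (forall f, f \in R -> exists a b : L, a != \top /\ fle (fab a b) f) &
           exists phi : S -> Rt R,
             [/\ bijective phi,
                 (forall x y, phi (add x y) = Radd (phi x) (phi y)) &
                 (forall x y, phi (mul x y) = Rmul (phi x) (phi y))]]).
Proof.
split; [exact: dir1 | exact: dir2].
Qed.
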